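(* Let $E/\mathbb{Q}$ be given by the model $y^2=x^3+Ax+B$ ($A,B\in\mathbb{Z}$) described in the context and $X=\max\{|A|^3,|B|^2\}$. Let $P,Q\in E(\mathbb{Q})$ satisfy $|x(P)|,|x(Q)|\le 2X^{1/6}$ and $x(P)=x_1/s$, $x(Q)=x_2/s$ with $x_1,x_2\in\mathbb{Z}$, $x_1\ne x_2$, and $s$ a positive integer. Then $$h(P+Q)\le 3h(s)+\tfrac12\log X+3.9.$$
   Context: The model is obtained from a global minimal Weierstrass equation of $E$ by the substitution $x\mapsto \frac{1}{36}(x-3b_2)$, $y\mapsto \frac12(\frac{y}{108}-\frac{a_1}{36}(x-3b_2)-a_3)$. $h$ is the absolute logarithmic Weil height (so $h(s)=\log s$) and $h(P)=h(x(P))$. *)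

(* Defs.v *)
From HB Require Import structures.
From mathcomp Require Import all_boot all_order all_algebra.
From mathcomp Require Import reals exp.
Set Implicit Arguments. Unset Strict Implicit. Unset Printing Implicit Defensive.
Import Order.TTheory GRing.Theory Num.Theory.
Local Open Scope ring_scope.

(* A (general) Weierstrass model y^2 + a1 xy + a3 y = x^3 + a2 x^2 + a4 x + a6 over Q *)
Record wmodel := WM { a1 : rat; a2 : rat; a3 : rat; a4 : rat; a6 : rat }.

Definition b2 (m : wmodel) : rat := a1 m ^+ 2 + 4 * a2 m.
Definition b4 (m : wmodel) : rat := 2 * a4 m + a1 m * a3 m.
Definition b6 (m : wmodel) : rat := a3 m ^+ 2 + 4 * a6 m.
Definition b8 (m : wmodel) : rat :=
  a1 m ^+ 2 * a6 m + 4 * a2 m * a6 m - a1 m * a3 m * a4 m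
  + a2 m * a3 m ^+ 2 - a4 m ^+ 2.
Definition c4 (m : wmodel) : rat := b2 m ^+ 2 - 24 * b4 m.
Definition c6 (m : wmodel) : rat := - b2 m ^+ 3 + 36 * b2 m * b4 m - 216 * b6 m.
Definition disc (m : wmodel) : rat :=
  - b2 m ^+ 2 * b8 m - 8 * b4 m ^+ 3 - 27 * b6 m ^+ 2 + 9 * b2 m * b4 m * b6 m.

Definition integral_model (m : wmodel) : Prop :=
  [/\ a1 m \is a Num.int, a2 m \is a Num.int, a3 m \is a Num.int,
      a4 m \is a Num.int & a6 m \is a Num.int].

(* The model obtained by the change of variables
   x = u^2 x' + r,  y = u^3 y' + s u^2 x' + t   (u <> 0)  (Silverman, Table 3.1). *)
Definition change (m : wmodel) (u r s t : rat) : wmodel :=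
  WM ((a1 m + 2 * s) / u)
     ((a2 m - s * a1 m + 3 * r - s ^+ 2) / u ^+ 2)
     ((a3 m + r * a1 m + 2 * t) / u ^+ 3)
     ((a4 m - s * a3 m + 2 * r * a2 m - (t + r * s) * a1 m + 3 * r ^+ 2
        - 2 * s * t) / u ^+ 4)
     ((a6 m + r * a4 m + r ^+ 2 * a2 m + r ^+ 3 - t * a3 m - t ^+ 2
        - r * t * a1 m) / u ^+ 6).

Definition global_minimal (m : wmodel) : Prop :=
  [/\ integral_model m, disc m != 0 &
      forall u r s t : rat, u != 0 -> integral_model (change m u r s t) ->
        `|disc m| <= `|disc (change m u r s t)| ].

Inductive point := Inf | Aff of rat & rat.

Definition on_curve (A B : int) (P : point) : Prop :=
  match P with
  | Inf => True
  | Aff x y => y ^+ 2 = x ^+ 3 + A%:~R * x + B%:~R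
  end.

Definition ec_add (A B : int) (P Q : point) : point :=
  match P, Q with
  | Inf, _ => Q
  | _, Inf => P
  | Aff x1 y1, Aff x2 y2 =>
    if x1 == x2 then
      if y1 == - y2 then Inf
      else let l := (3 * x1 ^+ 2 + A%:~R) / (2 * y1) in
           let x3 := l ^+ 2 - x1 - x2 in Aff x3 (l * (x1 - x3) - y1)
    else let l := (y2 - y1) / (x2 - x1) in
         let x3 := l ^+ 2 - x1 - x2 in Aff x3 (l * (x1 - x3) - y1)
  end.

Definition hrat (R : realType) (q : rat) : R :=
  ln (Num.max (`|numq q|%:~R) ((denq q)%:~R)).

Definition hpt (R : realType) (P : point) : R :=
  match P with Inf => 0 | Aff x _ => hrat R x end.

(* Main.v *)
Require Import Defs.
From HB Require Import structures.
From mathcomp Require Import all_boot all_order all_algebra.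
From mathcomp Require Import reals exp sequences.
From mathcomp Require Import ring lra.
Import Order.TTheory GRing.Theory Num.Theory.
Local Open Scope ring_scope.
Lemma qint_sqr (q : rat) : q ^+ 2 \is a Num.int -> q \is a Num.int.
Proof.
move=> hq; rewrite Qint_def.
have cnd : coprime `|numq q| `|denq q| := coprime_num_den q.
have e1 : (numq q)%:~R = q * (denq q)%:~R :> rat := numqE q.
have e2 : (numq (q ^+ 2))%:~R = q ^+ 2 := numqK hq.
have e3 : numq q * numq q = numq (q ^+ 2) * denq q * denq q.
  apply/eqP; rewrite -(eqr_int rat); apply/eqP; rewrite !rmorphM /= e1 e2; ring.
have hd : (denq q %| numq q * numq q)%Z.
  by rewrite e3 dvdz_mull.
rewrite Gauss_dvdzr in hd; last by rewrite coprimezE coprime_sym.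
rewrite dvdzE in hd.
have : coprime `|denq q| `|denq q|.
  exact: (coprime_dvdl hd cnd).
rewrite /coprime gcdnn => /eqP h1.
by rewrite -absz_denq h1.
Qed.

Lemma height_frac (n d : int) : 0 < d ->
  (`|numq (n%:~R / d%:~R : rat)| <= `|n|) /\ (denq (n%:~R / d%:~R : rat) <= d).
Proof.
move=> d0; set q := (n%:~R / d%:~R : rat).
have cnd : coprime `|numq q| `|denq q| := coprime_num_den q.
have e1 : (numq q)%:~R = q * (denq q)%:~R :> rat := numqE q.
have e3 : numq q * d = n * denq q.
  apply/eqP; rewrite -(eqr_int rat); apply/eqP; rewrite !rmorphM /= e1 /q; field.
  by rewrite intr_eq0 gt_eqF.
have hd : (denq q %| numq q * d)%Z by rewrite e3 dvdz_mull.
rewrite Gauss_dvdzr in hd; last by rewrite coprimezE coprime_sym.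
rewrite dvdzE in hd.
have dle : denq q <= d.
  have := dvdn_leq _ hd; rewrite absz_gt0 gt_eqF // => /(_ isT).
  by rewrite -lez_nat !abszE normr_denq gtr0_norm.
split=> //.
have : `|numq q| * d <= `|n| * d.
  rewrite -[d]gtr0_norm // -!normrM e3 !normrM; apply: ler_wpM2l => //; rewrite (gtr0_norm (denq_gt0 q)) gtr0_norm //.
by rewrite ler_pM2r.
Qed.
Lemma sq_step (R : realType) (x c c' : R) : 0 <= c -> c <= x -> c' <= c * c -> c' <= x ^+ 2.
Proof. move=> c0 cx h; apply: (le_trans h); rewrite expr2; apply: ler_pM => //; lra. Qed.

Lemma exp_bound (R : realType) : (44 : R) <= expR (39 / 10).
Proof.
have -> : (39 / 10 : R) = (39 / 1280) * (128%:R) by rewrite -[128%:R]/(128 : R); lra.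
rewrite expRM_natr.
set a := expR (39 / 1280 : R).
have h0 : (1319 / 1280 : R) <= a by apply: le_trans (expR_ge1Dx _); lra.
have -> : (128 = 2 * 2 * 2 * 2 * 2 * 2 * 2)%N by [].
rewrite !exprM.
have h1 : (103/97 : R) <= (a ^+ 2) by apply: (@sq_step R _ _ _ _ h0); lra.
have h2 : (168/149 : R) <= ((a ^+ 2) ^+ 2) by apply: (@sq_step R _ _ _ _ h1); lra.
have h3 : (239/188 : R) <= (((a ^+ 2) ^+ 2) ^+ 2) by apply: (@sq_step R _ _ _ _ h2); lra.
have h4 : (181/112 : R) <= ((((a ^+ 2) ^+ 2) ^+ 2) ^+ 2) by apply: (@sq_step R _ _ _ _ h3); lra.
have h5 : (269/103 : R) <= (((((a ^+ 2) ^+ 2) ^+ 2) ^+ 2) ^+ 2) by apply: (@sq_step R _ _ _ _ h4); lra.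
have h6 : (266/39 : R) <= ((((((a ^+ 2) ^+ 2) ^+ 2) ^+ 2) ^+ 2) ^+ 2) by apply: (@sq_step R _ _ _ _ h5); lra.
have h7 : (1256/27 : R) <= (((((((a ^+ 2) ^+ 2) ^+ 2) ^+ 2) ^+ 2) ^+ 2) ^+ 2) by apply: (@sq_step R _ _ _ _ h6); lra.
apply: le_trans h7; lra.
Qed.

Lemma nmul {R : realType} {x y a b : R} : `|x| <= a -> `|y| <= b -> `|x * y| <= a * b.
Proof. by move=> hx hy; rewrite normrM; apply: ler_pM. Qed.

Lemma nadd {R : realType} {x y a b : R} : `|x| <= a -> `|y| <= b -> `|x + y| <= a + b.
Proof. by move=> hx hy; apply: le_trans (ler_normD _ _) _; apply: lerD. Qed.

Lemma nsub {R : realType} {x y a b : R} : `|x| <= a -> `|y| <= b -> `|x - y| <= a + b.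
Proof. by move=> hx hy; apply: nadd => //; rewrite normrN. Qed.

Lemma Mbound {R : realType} {U AR BR S T : R} : 0 <= S -> 0 <= T ->
  `|U| <= 2 * S * T -> `|AR| <= T ^+ 2 -> `|BR| <= T ^+ 3 ->
  `|U ^+ 3 + AR * U * S ^+ 2 + BR * S ^+ 3| <= 11 * (S * T) ^+ 3.
Proof.
move=> S0 T0 hU hA hB.
have hS2 : `|S ^+ 2| <= S ^+ 2 by rewrite ger0_norm ?exprn_ge0.
have hS3 : `|S ^+ 3| <= S ^+ 3 by rewrite ger0_norm ?exprn_ge0.
have h1 : `|U ^+ 3| <= (2 * S * T) ^+ 3.
  by rewrite normrX; apply: lerXn2r => //; rewrite nnegrE // mulr_ge0 // mulr_ge0.
have h2 := nmul (nmul hA hU) hS2.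
have h3 := nmul hB hS3.
apply: le_trans (nadd (nadd h1 h2) h3) _.
rewrite le_eqVlt; apply/orP; left; apply/eqP; ring.
Qed.

Lemma Nbound {R : realType} {U1 U2 AR BR S T W : R} : 0 <= S -> 0 <= T ->
  `|U1| <= 2 * S * T -> `|U2| <= 2 * S * T -> `|AR| <= T ^+ 2 -> `|BR| <= T ^+ 3 ->
  W ^+ 2 = (U1 ^+ 3 + AR * U1 * S ^+ 2 + BR * S ^+ 3) * (U2 ^+ 3 + AR * U2 * S ^+ 2 + BR * S ^+ 3) ->
  `|(U1 * U2 + AR * S ^+ 2) * (U1 + U2) + 2 * BR * S ^+ 3 - 2 * W| <= 44 * (S * T) ^+ 3.
Proof.
move=> S0 T0 h1 h2 hA hB hW.
have m1 := Mbound S0 T0 h1 hA hB.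
have m2 := Mbound S0 T0 h2 hA hB.
set K := 11 * (S * T) ^+ 3.
have K0 : 0 <= K by rewrite /K mulr_ge0 // exprn_ge0 // mulr_ge0.
have hW' : `|W| <= K.
  have : `|W| * `|W| <= K * K.
    rewrite -normrM -expr2 hW normrM; apply: ler_pM => //.
  have := normr_ge0 W; nra.
have hS2 : `|S ^+ 2| <= S ^+ 2 by rewrite ger0_norm ?exprn_ge0.
have hS3 : `|S ^+ 3| <= S ^+ 3 by rewrite ger0_norm ?exprn_ge0.
have h2' : `|2 : R| <= 2 by rewrite ger0_norm.
have e := nsub (nadd (nmul (nadd (nmul h1 h2) (nmul hA hS2)) (nadd h1 h2)) (nmul (nmul h2' hB) hS3)) (nmul h2' hW').
apply: le_trans e _; rewrite le_eqVlt; apply/orP; left; apply/eqP; rewrite /K; ring.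
Qed.

Lemma disc_id (m : wmodel) : 1728 * disc m = c4 m ^+ 3 - c6 m ^+ 2.
Proof. rewrite /disc /c4 /c6 /b2 /b4 /b6 /b8; ring. Qed.

Theorem lemma3p7 (R : realType) (A B : int) (m : wmodel)
  (hmin : global_minimal m)
  (hA : A%:~R = -27 * c4 m) (hB : B%:~R = -54 * c6 m)
  (x1 x2 : int) (s : nat) (yP yQ : rat) :
  (0 < s)%N -> x1 != x2 ->
  on_curve A B (Aff (x1%:~R / s%:R) yP) ->
  on_curve A B (Aff (x2%:~R / s%:R) yQ) ->
  let X : int := Num.max (`|A| ^+ 3) (`|B| ^+ 2) in
  `|ratr (x1%:~R / s%:R) : R| <= 2 * (X%:~R : R) `^ (6^-1) ->
  `|ratr (x2%:~R / s%:R) : R| <= 2 * (X%:~R : R) `^ (6^-1) ->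
  hpt R (ec_add A B (Aff (x1%:~R / s%:R) yP) (Aff (x2%:~R / s%:R) yQ))
    <= 3 * ln (s%:R : R) + 2^-1 * ln (X%:~R : R) + 39 / 10.
Proof.
move=> s0 nx hP hQ X hb1 hb2; move: hb1 hb2.
rewrite /on_curve in hP hQ.
have hAB : (A != 0) || (B != 0).
  case: hmin => _ hd _.
  case: (boolP (A != 0)) => [h|/negPn/eqP A0]; first exact: isT.
  case: (boolP (B != 0)) => [h|/negPn/eqP B0]; first exact: isT.
  exfalso; move/negP: hd; apply; apply/eqP.
  have n27 : (-27 : rat) != 0 by rewrite oppr_eq0 pnatr_eq0.
  have n54 : (-54 : rat) != 0 by rewrite oppr_eq0 pnatr_eq0.
  have : (A%:~R : rat) = 0 by rewrite A0.
  rewrite hA => /eqP; rewrite mulf_eq0 (negbTE n27) orFb => /eqP c40.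
  have : (B%:~R : rat) = 0 by rewrite B0.
  rewrite hB => /eqP; rewrite mulf_eq0 (negbTE n54) orFb => /eqP c60.
  clear hA hB.
  have := disc_id m; rewrite c40 c60 expr0n subr0 => /eqP.
  rewrite mulf_eq0 => /orP [|/eqP //]; by rewrite pnatr_eq0.
clear hA hB hmin.
set XR := (X%:~R : R).
have X1 : (1 <= X).
  rewrite /X le_max; apply/orP; case/orP: hAB => h; [left|right].
    by apply: exprn_ege1; rewrite -normr_gt0 in h.
  by apply: exprn_ege1; rewrite -normr_gt0 in h.
have sne : (s%:R : rat) != 0 by rewrite pnatr_eq0 -lt0n.
set c := (s%:R : rat) in hP hQ sne *.
pose M1 : int := x1 ^+ 3 + A * x1 * (s%:R) ^+ 2 + B * (s%:R) ^+ 3.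
pose M2 : int := x2 ^+ 3 + A * x2 * (s%:R) ^+ 2 + B * (s%:R) ^+ 3.
have e1 : yP ^+ 2 * c ^+ 3 = M1%:~R.
  rewrite hP /M1 !(rmorphD, rmorphM, rmorphXn, rmorph_nat) /=; field.
  exact: sne.
have e2 : yQ ^+ 2 * c ^+ 3 = M2%:~R.
  rewrite hQ /M2 !(rmorphD, rmorphM, rmorphXn, rmorph_nat) /=; field.
  exact: sne.
pose r := yP * yQ * c ^+ 3.
have hr2 : r ^+ 2 = (M1 * M2)%:~R.
  by rewrite rmorphM /= -e1 -e2 /r; ring.
have rint : r \is a Num.int by apply: qint_sqr; rewrite hr2 intr_int.
pose w := numq r.
have hw : w%:~R = r := numqK rint.
have hw2 : w ^+ 2 = M1 * M2.
  by apply/eqP; rewrite -(eqr_int rat) rmorphXn /= hw hr2.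
have neq : (x1%:~R / c == x2%:~R / c) = false.
  apply/negbTE; apply: contra nx => /eqP h; apply/eqP.
  have := congr1 (fun z => z * c) h; rewrite !divfK // => h'.
  exact: (intr_inj h').
rewrite /ec_add neq /hpt; cbv zeta beta iota.
pose Nn : int := (x1 * x2 + A * (s%:R) ^+ 2) * (x1 + x2) + 2 * B * (s%:R) ^+ 3 - 2 * w.
pose Dd : int := s%:R * (x1 - x2) ^+ 2.
have Dd0 : 0 < Dd.
  rewrite /Dd mulr_gt0 // ?ltr0n // exprn_even_gt0 // subr_eq0 //.
have Ddne : (Dd%:~R : rat) != 0 by rewrite intr_eq0 gt_eqF.
have x3E : ((yQ - yP) / (x2%:~R / c - x1%:~R / c)) ^+ 2 - x1%:~R / c - x2%:~R / c
    = Nn%:~R / Dd%:~R.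
  apply: (mulIf Ddne); rewrite divfK //.
  have dne : x2%:~R / c - x1%:~R / c != 0.
    by rewrite subr_eq0 eq_sym neq.
  have hstep : (((yQ - yP) / (x2%:~R / c - x1%:~R / c)) ^+ 2 - x1%:~R / c - x2%:~R / c) * Dd%:~R
     = yQ ^+ 2 * c ^+ 3 + yP ^+ 2 * c ^+ 3 - 2 * (yP * yQ * c ^+ 3)
       - (x1%:~R + x2%:~R) * (x1%:~R - x2%:~R) ^+ 2.
    rewrite /Dd !(rmorphD, rmorphM, rmorphXn, rmorph_nat, rmorphB) /= -/c.
    have dne' : (x2%:~R - x1%:~R : rat) != 0 by rewrite subr_eq0 eqr_int eq_sym.
    by field; rewrite ?dne' ?sne.
  rewrite hstep e1 e2 -/r -hw /Nn /M1 /M2.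
  rewrite !(rmorphD, rmorphM, rmorphXn, rmorph_nat, rmorphB) /= -/c.
  ring.
rewrite x3E => hb1 hb2.
clear x3E hP hQ e1 e2 hr2 rint hw neq Ddne.
have [hn hd] := height_frac Nn Dd Dd0.
rewrite /hrat.
set Mx := Num.max _ _.
have S1 : (1 : R) <= s%:R by rewrite ler1n.
have S0 : (0 : R) <= s%:R by apply: le_trans S1.
have Sp : (0 : R) < s%:R by apply: lt_le_trans S1.
set S := (s%:R : R) in S1 S0 Sp *.
have XR1 : 1 <= XR by rewrite /XR ler1z.
rewrite -/XR in hb1 hb2.
set T := XR `^ 6^-1 in hb1 hb2 *.
have T0 : 0 <= T := powR_ge0 _ _.
have T6 : T ^+ 6 = XR.
  rewrite /T -powR_mulrn ?powR_ge0 // -powRrM mulVf ?pnatr_eq0 // powRr1 //.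
  exact: le_trans XR1.
have T1 : 1 <= T.
  have : (1 : R) ^+ 6 <= T ^+ 6 by rewrite expr1n T6.
  by rewrite ler_pXn2r // nnegrE.
have hAR : `|(A%:~R : R)| <= T ^+ 2.
  have : `|(A%:~R : R)| ^+ 3 <= (T ^+ 2) ^+ 3.
    have -> : (T ^+ 2) ^+ 3 = T ^+ 6 by rewrite -exprM.
    rewrite T6 /XR -intr_norm -rmorphXn /= ler_int /X le_max lexx //.
  by rewrite ler_pXn2r // nnegrE ?exprn_ge0.
have hBR : `|(B%:~R : R)| <= T ^+ 3.
  have : `|(B%:~R : R)| ^+ 2 <= (T ^+ 3) ^+ 2.
    have -> : (T ^+ 3) ^+ 2 = T ^+ 6 by rewrite -exprM.
    rewrite T6 /XR -intr_norm -rmorphXn /= ler_int /X le_max lexx orbT //.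
  by rewrite ler_pXn2r // nnegrE ?exprn_ge0.
have hU1 : `|(x1%:~R : R)| <= 2 * S * T.
  move: hb1; rewrite /c fmorph_div rmorph_int rmorph_nat normf_div (gtr0_norm Sp).
  rewrite ler_pdivrMr // => h; apply: le_trans h _.
  by rewrite le_eqVlt; apply/orP; left; apply/eqP; ring.
have hU2 : `|(x2%:~R : R)| <= 2 * S * T.
  move: hb2; rewrite /c fmorph_div rmorph_int rmorph_nat normf_div (gtr0_norm Sp).
  rewrite ler_pdivrMr // => h; apply: le_trans h _.
  by rewrite le_eqVlt; apply/orP; left; apply/eqP; ring.
have hW := congr1 (fun z : int => (z%:~R : R)) hw2.
rewrite /M1 /M2 !(rmorphD, rmorphM, rmorphXn, rmorph_nat) /= -/S in hW.
have NB := Nbound S0 T0 hU1 hU2 hAR hBR hW.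
have hN : (`|Nn|%:~R : R) <= 44 * (S * T) ^+ 3.
  rewrite intr_norm /Nn !(rmorphD, rmorphN, rmorphM, rmorphXn, rmorph_nat, rmorphB) /= -/S.
  exact: NB.
have hD : (Dd%:~R : R) <= 16 * (S * T) ^+ 3.
  rewrite /Dd !(rmorphM, rmorphXn, rmorph_nat, rmorphB) /= -/S.
  have h12 := nsub hU1 hU2.
  have hd2 : (x1%:~R - x2%:~R : R) ^+ 2 <= (2 * S * T + 2 * S * T) ^+ 2.
    rewrite -[X in X <= _]ger0_norm ?sqr_ge0 // normrX.
    by apply: lerXn2r => //; rewrite nnegrE // ?normr_ge0; apply: le_trans h12.
  apply: le_trans (ler_wpM2l S0 hd2) _.
  have := mulr_ge0 (exprn_ge0 3 S0) (exprn_ge0 2 T0); nra.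
have E44 := exp_bound R.
set K := expR (39/10 : R) * S ^+ 3 * T ^+ 3.
have hP3 : 0 <= (S * T) ^+ 3 by rewrite exprn_ge0 // mulr_ge0.
have hK : 44 * (S * T) ^+ 3 <= K.
  by rewrite /K -mulrA -exprMn; apply: ler_wpM2r.
have hMx : Mx <= K.
  rewrite /Mx ge_max; apply/andP; split.
    apply: le_trans hK; apply: le_trans hN; by rewrite ler_int.
  apply: le_trans hK; apply: le_trans (le_trans _ hD) _; first by rewrite ler_int.
  apply: ler_wpM2r => //; lra.
have Tp : 0 < T by apply: lt_le_trans T1.
have Mxp : 0 < Mx.
  by rewrite /Mx lt_max; apply/orP; right; rewrite ltr0z denq_gt0.
have Kp : 0 < K by rewrite /K !mulr_gt0 ?expR_gt0 ?exprn_gt0.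
have lnle : ln Mx <= ln K by rewrite ler_ln ?posrE.
have lnK : ln K = 39/10 + 3 * ln S + 3 * ln T.
  rewrite /K !lnM ?posrE ?mulr_gt0 ?expR_gt0 ?exprn_gt0 // expRK; lra.
have lnT : ln T = 6^-1 * ln XR by rewrite /T ln_powR.
lra.
Qed.
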